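(* Let $n\ge 2$ and let $G=(V,E)$ be a $k$-edge-connected graph on $n$ vertices with $k\ge 7\log_2 n$. Then there is a set $S\subseteq V$ with $|S|\ge 2$ such that the induced subgraph $G[S]$ is $k/20$-edge-connected, $1/4$-dense in $G$, and satisfies $\phi(G[S])\ge 1/k$.
   Context: Graphs are finite, undirected, unweighted, loopless, possibly with parallel edges; $k$-edge-connected means every cut $(S,\overline S)$, $\emptyset\ne S\subsetneq V$, has at least $k$ edges. For a graph $H$ and $S\subseteq V(H)$, $\partial_H(S)$ is the number of edges of $H$ leaving $S$, $d_H(S)$ is the sum of $H$-degrees of vertices in $S$, and $\phi(H)=\min_{\emptyset\ne S\subsetneq V(H)}\partial_H(S)/\min\{d_H(S),d_H(V(H)\setminus S)\}$. An induced subgraph $H$ of $G$ is $\lambda$-dense if $d_H(v)\ge\lambda\, d_G(v)$ for every vertex $v$ of $H$. *)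

(* Defs.v *)
From HB Require Import structures.
From mathcomp Require Import all_boot all_order all_algebra.
From Stdlib Require Import Reals.
Set Implicit Arguments. Unset Strict Implicit. Unset Printing Implicit Defensive.
Import Order.TTheory GRing.Theory Num.Theory.
Local Open Scope ring_scope.

(* A finite undirected loopless multigraph on vertex type T:
   mult x y = number of parallel edges between x and y. *)
Record mgraph (T : finType) := MGraph {
  mult : T -> T -> nat;
  mult_sym : forall x y, mult x y = mult y x;
  mult_irr : forall x, mult x x = 0%N
}.

Section Graphs.
Variable T : finType.
Implicit Types (G : mgraph T) (A : {set T}).

Definition deg G (v : T) : nat := (\sum_(y : T) mult G v y)%N.
Definition degS G A : nat := (\sum_(v in A) deg G v)%N.
Definition cut G A : nat := (\sum_(x in A) \sum_(y in ~: A) mult G x y)%N.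

Definition edge_connected G (c : rat) : Prop :=
  forall A, A != set0 -> A != setT -> c <= (cut G A)%:R.

Definition cond_ratio G A : rat :=
  (cut G A)%:R / (minn (degS G A) (degS G (~: A)))%:R.

(* conductance phi(G) = min over nonempty proper A of cond_ratio.
   (The neutral element 1 only matters when there is no such A, i.e. |V| <= 1;
   note each ratio is <= 1 anyway.) *)
Definition phi G : rat :=
  \big[Num.min/1]_(A : {set T} | (A != set0) && (A != setT)) cond_ratio G A.
End Graphs.

Section Induced.
Variables (T : finType) (G : mgraph T) (S : {set T}).
Definition ind_mult (x y : {x : T | x \in S}) : nat := mult G (val x) (val y).
Lemma ind_mult_sym x y : ind_mult x y = ind_mult y x.
Proof. by rewrite /ind_mult mult_sym. Qed.
Lemma ind_mult_irr x : ind_mult x x = 0%N.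
Proof. by rewrite /ind_mult mult_irr. Qed.
Definition induced : mgraph {x : T | x \in S} := MGraph ind_mult_sym ind_mult_irr.
End Induced.

Definition dense (T : finType) (G : mgraph T) (S : {set T}) (lam : rat) : Prop :=
  forall v : {x : T | x \in S}, lam * (deg G (val v))%:R <= (deg (induced G S) v)%:R.

Definition log_bound (k n : nat) : Prop :=
  (7 * (ln (INR n) / ln 2) <= INR k)%R.

(* Main.v *)
Require Import Defs.
From HB Require Import structures.
From mathcomp Require Import all_boot all_order all_algebra.
From mathcomp Require Import zify.
Import Order.TTheory GRing.Theory Num.Theory.
Set Implicit Arguments. Unset Strict Implicit. Unset Printing Implicit Defensive.

Module LogPart.
From Stdlib Require Import Reals Lra.

Lemma INR_expn2 t : INR (expn 2 t) = (2 ^ t)%R.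
Proof.
elim: t => [|t IH]; first by rewrite expn0 /=.
rewrite expnS mult_INR IH /=; lra.
Qed.

Lemma log_bound_nat k n : (0 < n)%N -> log_bound k n -> (7 * trunc_log 2 n <= k)%N.
Proof.
move=> n0 hb; set t := trunc_log 2 n.
have ht : (expn 2 t <= n)%N by apply: trunc_logP.
have hR : (2 ^ t <= INR n)%R by rewrite -INR_expn2; apply: le_INR; apply/ssrnat.leP.
have l2 : (0 < ln 2)%R by have := ln_lt_2; lra.
have hl : (INR t * ln 2 <= ln (INR n))%R.
  rewrite -ln_pow; last lra.
  have p0 : (0 < 2 ^ t)%R by apply: pow_lt; lra.
  case: (Rle_lt_or_eq_dec _ _ hR) => h; last by rewrite h; lra.
  by apply: Rlt_le; apply: ln_increasing.
have : (INR (7 * t) <= INR k)%R.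
  rewrite mult_INR; apply: Rle_trans hb.
  have e7 : INR 7 = 7%R by simpl; lra.
  have -> : (INR 7 * INR t = 7 * (INR t * ln 2 / ln 2))%R.
    by rewrite e7; field; lra.
  apply: Rmult_le_compat_l; first lra.
  apply: Rmult_le_compat_r; last exact: hl.
  by apply: Rlt_le; apply: Rinv_0_lt_compat.
by move/INR_le/ssrnat.leP.
Qed.

End LogPart.

Section T1.
Variables (T : finType) (G : mgraph T).
Implicit Types (S A X Y : {set T}).

Definition ee (X Y : {set T}) : nat := \sum_(x in X) \sum_(y in Y) mult G x y.

Lemma ee_sym X Y : ee X Y = ee Y X.
Proof.
rewrite /ee exchange_big /=; apply: eq_bigr => y _; apply: eq_bigr => x _.
exact: mult_sym.
Qed.

Lemma ee_splitl S A Y : A \subset S -> ee S Y = ee A Y + ee (S :\: A) Y.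
Proof. by move=> sAS; rewrite /ee (big_setID A) (setIidPr sAS). Qed.

Lemma ee_splitr X S A : A \subset S -> ee X S = ee X A + ee X (S :\: A).
Proof. by move=> sAS; rewrite ee_sym (ee_splitl _ sAS) !(ee_sym X). Qed.

Lemma cutE A : cut G A = ee A (~: A).
Proof. by []. Qed.

Lemma degSE A : degS G A = ee A setT.
Proof. by rewrite /degS /ee; apply: eq_bigr => v _; rewrite /deg; apply: eq_bigl => y; rewrite inE. Qed.

Lemma compl_split S A : A \subset S ->
  ee A (~: A) = ee A (S :\: A) + ee A (~: S).
Proof.
move=> sAS; rewrite /ee -big_split /=; apply: eq_bigr => x _.
rewrite (big_setID S); congr (_ + _); apply: eq_bigl => y; rewrite !inE.
  by rewrite andbC.
by case yS: (y \in S) => //=; apply/negP => yA; move: yS; rewrite (subsetP sAS).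
Qed.

Lemma split_all S A : A \subset S ->
  [/\ cut G A = ee A (S :\: A) + ee A (~: S),
      cut G (S :\: A) = ee A (S :\: A) + ee (S :\: A) (~: S),
      cut G S = ee A (~: S) + ee (S :\: A) (~: S)
    & degS G S = degS G A + degS G (S :\: A)].
Proof.
move=> sAS; have sBS : S :\: A \subset S by apply: subsetDl.
have eB : S :\: (S :\: A) = A.
  apply/setP => x; rewrite !inE; case xA: (x \in A) => /=; first by rewrite (subsetP sAS).
  by case: (x \in S).
split.
- by rewrite cutE (compl_split sAS).
- by rewrite cutE (compl_split sBS) eB ee_sym.
- by rewrite cutE (ee_splitl _ sAS).
- by rewrite !degSE (ee_splitl _ sAS).
Qed.

Definition degN v : nat := \sum_y mult G v y.
Lemma degE v : deg G v = degN v. Proof. by []. Qed.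

Lemma cut1 v : cut G [set v] = deg G v.
Proof.
rewrite cutE /ee big_set1 degE /degN [RHS](bigD1 v) //= mult_irr add0n.
by apply: eq_bigl => y; rewrite !inE.
Qed.

Lemma degS1 v : degS G [set v] = deg G v.
Proof. by rewrite degSE /ee big_set1 degE /degN; apply: eq_bigl => y; rewrite inE. Qed.

End T1.

Section T2.
Variables (T : finType) (G : mgraph T) (S : {set T}).
Local Notation sT := {x : T | x \in S}.
Local Notation H := (induced G S).
Implicit Types (A B : {set sT}).

Lemma sum_val A (F : T -> nat) :
  \sum_(u in A) F (val u) = \sum_(x in [set val u | u in A]) F x.
Proof. by rewrite big_imset //; move=> u w _ _; apply: val_inj. Qed.

Lemma imset_valC A : [set val u | u in ~: A] = S :\: [set val u | u in A].
Proof.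
apply/setP => x; rewrite !inE; apply/imsetP/andP.
  case=> u; rewrite inE => uA ->; split; last exact: valP.
  by apply/imsetP => -[w wA /val_inj E]; move: uA; rewrite E wA.
case=> /imsetP nA xS; exists (exist _ x xS) => //; rewrite inE.
by apply/negP => uA; apply: nA; exists (exist _ x xS).
Qed.

Lemma imset_valT : [set val u | u in [set: sT]] = S.
Proof.
by rewrite -setC0 imset_valC imset0 setD0.
Qed.

Lemma imset_val_sub A : [set val u | u in A] \subset S.
Proof. by apply/subsetP => x /imsetP [u _ ->]; apply: valP. Qed.

Lemma ee_val A B :
  ee G [set val u | u in A] [set val u | u in B] =
  \sum_(u in A) \sum_(w in B) mult H u w.
Proof.
rewrite /ee -sum_val; apply: eq_bigr => u _; rewrite -sum_val; by [].
Qed.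

Lemma cut_ind A : cut H A = ee G [set val u | u in A] (S :\: [set val u | u in A]).
Proof. by rewrite -imset_valC (ee_val A (~: A)). Qed.

Lemma degS_ind A : degS H A = ee G [set val u | u in A] S.
Proof.
have -> : ee G [set val u | u in A] S = ee G [set val u | u in A] [set val u | u in [set: sT]] by rewrite imset_valT.
rewrite ee_val /degS; apply: eq_bigr => u _.
rewrite /deg; apply: eq_bigl => w; by rewrite inE.
Qed.

Lemma deg_ind u : deg H u = ee G [set val u] S.
Proof.
by rewrite -degS1 degS_ind imset_set1.
Qed.

Lemma card_val A : #|[set val u | u in A]| = #|A|.
Proof. by rewrite card_imset //; apply: val_inj. Qed.

End T2.

Section Main.
Variables (n : nat) (T : finType) (G : mgraph T) (k : nat).
Hypotheses (n2 : 2 <= n) (cardT : #|T| = n)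
  (hconn : forall A : {set T}, A != set0 -> A != setT -> k <= cut G A)
  (hlog : 7 * trunc_log 2 n <= k).

Definition tt s := trunc_log 2 n - trunc_log 2 s.
Definition Inv (S : {set T}) : bool :=
  10 * k * cut G S <= 20 * tt #|S| * degS G S + k * k.

Lemma k7 : 7 <= k.
Proof.
have : 0 < trunc_log 2 n by rewrite trunc_log_gt0 /=.
lia.
Qed.

Lemma tt_mono s s' : s <= s' -> tt s' <= tt s.
Proof. move=> h; rewrite /tt; have := leq_trunc_log 2 h; lia. Qed.

Lemma tt_half a s : 0 < a -> 2 * a <= s -> s <= n -> tt s + 1 <= tt a.
Proof.
move=> a0 h sn; rewrite /tt.
have h1 := trunc_log2_double a0.
have h2 : trunc_log 2 a.*2 <= trunc_log 2 s by apply: leq_trunc_log; rewrite -mul2n.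
have h3 := leq_trunc_log 2 sn.
lia.
Qed.

Lemma tt_bound s : 7 * tt s <= k.
Proof. rewrite /tt; lia. Qed.

Lemma cardS_le (S : {set T}) : #|S| <= n.
Proof. by rewrite -cardT max_card. Qed.

Lemma deg_ge v : k <= deg G v.
Proof.
rewrite -cut1; apply: hconn.
  by apply/set0Pn; exists v; rewrite set11.
apply/negP => /eqP E; have := cards1 v; rewrite E cardsT cardT; lia.
Qed.

Lemma ee_le (A S : {set T}) : ee G A S <= degS G A.
Proof. by rewrite degSE (ee_splitr _ _ (subsetT S)) leq_addr. Qed.

Lemma not_single v : ~~ Inv [set v].
Proof.
rewrite /Inv cut1 degS1 cards1 -ltnNge.
have t1 : 7 * tt 1 <= k by apply: tt_bound.
set d := deg G v; set t := tt 1.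
have dk : k <= d by apply: deg_ge.
have f1 : 7 * (t * d) <= k * d by rewrite mulnA leq_mul2r t1 orbT.
have f2 : k * k <= k * d by rewrite leq_mul2l dk orbT.
have f3 : 49 <= k * k by have := k7; nia.
lia.
Qed.

Lemma InvT : Inv setT.
Proof.
rewrite /Inv cutE /ee setCT big1 ?muln0 // => x _; exact: big_set0.
Qed.

Section Split.
Variable S : {set T}.
Hypotheses (IS : Inv S) (minS : forall S', S' != set0 -> Inv S' -> #|S| <= #|S'|).

Lemma no_smaller (S' : {set T}) : S' != set0 -> #|S'| < #|S| -> ~~ Inv S'.
Proof. move=> ne lt; apply/negP => I'; have := minS ne I'; lia. Qed.

Lemma split_contra (A : {set T}) : A \subset S -> A != set0 -> S :\: A != set0 ->
  2 * #|A| <= #|S| -> k * k + 20 * degS G A < 20 * k * ee G A (S :\: A).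
Proof.
move=> sAS nA nB hA.
have cB : #|S :\: A| = #|S| - #|A| by rewrite cardsD (setIidPr sAS).
have pA : 0 < #|A| by rewrite card_gt0.
have pB : 0 < #|S :\: A| by rewrite card_gt0.
have sB : #|S :\: A| <= #|S| by rewrite cB leq_subr.
have nIA := no_smaller nA (ltac:(lia) : #|A| < #|S|).
have nIB := no_smaller nB (ltac:(lia) : #|S :\: A| < #|S|).
move: IS nIA nIB; rewrite /Inv -!ltnNge.
have [cA cBB cS vS] := split_all G sAS.
rewrite cA cBB cS vS.
have hS := cardS_le S.
have tA := tt_half pA hA hS.
have tB := tt_mono sB.
set x := ee G A (S :\: A); set a := ee G A (~: S); set b := ee G (S :\: A) (~: S).
set vA := degS G A; set vB := degS G (S :\: A).
set tSv := tt #|S|; set tAv := tt #|A|; set tBv := tt #|S :\: A|.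
have p1 : tSv * vA + vA <= tAv * vA.
  by have := leq_mul2r vA (tSv + 1) tAv; rewrite tA orbT mulnDl mul1n.
have p2 : tSv * vB <= tBv * vB by rewrite leq_mul2r tB orbT.
move=> h1 h2 h3; lia.
Qed.

End Split.

Lemma main_nat : exists S : {set T},
  [/\ 2 <= #|S|,
      (forall A : {set T}, A \subset S -> A != set0 -> S :\: A != set0 -> k <= 20 * ee G A (S :\: A)),
      (forall v, v \in S -> deg G v <= 4 * ee G [set v] S)
    & (forall A : {set T}, A \subset S -> A != set0 -> S :\: A != set0 ->
         minn (ee G A S) (ee G (S :\: A) S) <= k * ee G A (S :\: A))].
Proof.
have neT : [set: T] != set0 by rewrite -card_gt0 cardsT cardT; lia.
have PT : ([set: T] != set0) && Inv [set: T] by rewrite neT InvT.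
have [S /andP [neS IS] minS'] := @arg_minnP _ [set: T] (fun S : {set T} => (S != set0) && Inv S) (fun S : {set T} => #|S|) PT.
have minS : forall S', S' != set0 -> Inv S' -> #|S| <= #|S'|.
  by move=> S' h1 h2; apply: minS'; rewrite h1 h2.
have k7' := k7.
have key : forall A : {set T}, A \subset S -> A != set0 -> S :\: A != set0 ->
   exists2 C, C = A \/ C = S :\: A &
   k * k + 20 * degS G C < 20 * k * ee G A (S :\: A).
  move=> A sAS nA nB.
  have sBS : S :\: A \subset S by apply: subsetDl.
  have eB : S :\: (S :\: A) = A.
    apply/setP => y; rewrite !inE; case yA: (y \in A) => /=; first by rewrite (subsetP sAS).
    by case: (y \in S).
  have cB : #|S :\: A| = #|S| - #|A| by rewrite cardsD (setIidPr sAS).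
  have cA : #|A| <= #|S| by apply: subset_leq_card.
  case: (leqP (2 * #|A|) #|S|) => h.
    by exists A; [left | exact: split_contra].
  exists (S :\: A); first by right.
  have := @split_contra S IS minS (S :\: A) sBS nB; rewrite eB ee_sym.
  by apply => //; lia.
have S2 : 2 <= #|S|.
  rewrite leqNgt; apply/negP => lt1.
  have : #|S| == 1 by have := card_gt0 S; rewrite neS; lia.
  case/cards1P => v Sv; move: IS; rewrite Sv; apply/negP; exact: not_single.
exists S; split => //.
- move=> A sAS nA nB; have [C _ h] := key A sAS nA nB.
  rewrite leqNgt; apply/negP => lt; move: h; set x := ee G A (S :\: A).
  have : k * (20 * x) < k * k by rewrite ltn_mul2l lt; lia.
  lia.
- move=> v vS; rewrite leqNgt; apply/negP => lt.
  have sv : [set v] \subset S by rewrite sub1set.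
  have cS1 := cardsD1 v S; rewrite vS in cS1.
  set S' := S :\: [set v] in cS1 *.
  have nS' : S' != set0 by rewrite -card_gt0; lia.
  have cS' : #|S'| < #|S| by lia.
  move: (no_smaller IS minS nS' cS'); apply/negP.
  have [c1 c2 c3 c4] := split_all G sv.
  move: IS; rewrite /Inv c2 c3 c4 degS1.
  rewrite cut1 in c1.
  rewrite (ee_splitr _ _ sv) in lt.
  have e0 : ee G [set v] [set v] = 0 by rewrite /ee !big_set1 mult_irr.
  rewrite e0 add0n in lt.
  have tm : tt #|S| <= tt #|S'| by apply: tt_mono; lia.
  have tb := tt_bound #|S|.
  set x := ee G [set v] S'; set b := ee G [set v] (~: S); set a := ee G S' (~: S).
  set d := deg G v; set vSS := degS G S'; set tS := tt #|S|; set tS' := tt #|S'|.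
  have f1 : 7 * (tS * d) <= k * d by rewrite mulnA leq_mul2r tb orbT.
  have f2 : tS * vSS <= tS' * vSS by rewrite leq_mul2r tm orbT.
  have f3 : k * (4 * x + 1) <= k * d by rewrite leq_mul2l addn1 lt orbT.
  have f4 : k * d = k * x + k * b by rewrite -mulnDr -c1.
  move=> h; lia.
- move=> A sAS nA nB; have [C hC h] := key A sAS nA nB.
  have : ee G C S <= degS G C by apply: ee_le.
  have : minn (ee G A S) (ee G (S :\: A) S) <= ee G C S.
    by case: hC => ->; [apply: geq_minl | apply: geq_minr].
  move: h; set x := ee G A (S :\: A); lia.
Qed.

End Main.

Local Open Scope ring_scope.

Theorem mainTheorem9 (n : nat) (T : finType) (G : mgraph T) (k : nat) :
  (2 <= n)%N -> #|T| = n ->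
  edge_connected G k%:R ->
  log_bound k n ->
  exists S : {set T},
    [/\ (2 <= #|S|)%N,
        edge_connected (induced G S) (k%:R / 20),
        dense G S (1 / 4)
      & 1 / k%:R <= phi (induced G S)].
Proof.
move=> n2 cT hc hl.
have hlog := LogPart.log_bound_nat (ltnW n2) hl.
have k0 : (0 < k)%N.
  have : (0 < trunc_log 2 n)%N by rewrite trunc_log_gt0 /=.
  lia.
have hconn : forall A : {set T}, A != set0 -> A != setT -> (k <= cut G A)%N.
  by move=> A h1 h2; rewrite -(ler_nat rat); apply: hc.
have [S [S2 hE hD hC]] := main_nat n2 cT hconn hlog.
have kR : 0 < (k%:R : rat) by rewrite ltr0n.
have tr : forall A : {set {x : T | x \in S}}, A != set0 -> A != setT ->
   [/\ [set val u | u in A] \subset S, [set val u | u in A] != set0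
     & S :\: [set val u | u in A] != set0].
  move=> A nA nT; split; first exact: imset_val_sub.
    by rewrite imset_eq0.
  rewrite -imset_valC imset_eq0; apply/negP => /eqP h; apply/negP: nT.
  by rewrite negbK -[A]setCK h setC0.
exists S; split; first exact: S2.
- move=> A nA nT; have [sA nA' nB'] := tr A nA nT.
  rewrite cut_ind ler_pdivrMr // -natrM ler_nat mulnC.
  exact: hE.
- move=> v; rewrite deg_ind.
  have := hD (val v) (valP v); rewrite -(ler_nat rat) natrM => h.
  by rewrite div1r ler_pdivrMl ?ltr0n.
- rewrite /phi; apply: (big_ind (fun r => 1 / k%:R <= r)).
  + by rewrite ler_pdivrMr // mul1r ler1n.
  + by move=> x y hx hy; rewrite le_min hx hy.
  move=> A /andP [nA nT]; have [sA nA' nB'] := tr A nA nT.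
  rewrite /cond_ratio cut_ind !degS_ind imset_valC.
  have h1 := hC _ sA nA' nB'; have h2 := hE _ sA nA' nB'.
  set B := S :\: [set val u | u in A] in h1 h2 *.
  set x := ee G [set val u | u in A] B in h1 h2 *.
  set m := minn _ _ in h1 *.
  have sBS : B \subset S by apply: subsetDl.
  have eB : S :\: B = [set val u | u in A].
    apply/setP => y; rewrite !inE; case yA: (y \in [set val u | u in A]) => /=.
      by rewrite (subsetP sA).
    by case: (y \in S).
  have m1 : (x <= ee G [set val u | u in A] S)%N.
    by rewrite (ee_splitr _ _ sBS) leq_addr.
  have m2 : (x <= ee G B S)%N.
    by rewrite (ee_splitr _ _ (subsetDl S B)) eB [ee G B _]ee_sym leq_addr.
  have mx : (x <= m)%N by rewrite /m leq_min m1 m2.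
  have mpos : (0 < m)%N by lia.
  rewrite ler_pdivlMr ?ltr0n // mulrC mulrA mulr1 ler_pdivrMr // -natrM ler_nat.
  by rewrite mulnC.
Qed.
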